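(* Let $n\ge1$, $1\le M\le 2^{n-1}$, $a:=M/2^n$, and let $f:\{-1,1\}^n\to\{-1,1\}$ satisfy $|f^{-1}(1)|=M$. For every even $m$ with $2\le m\le n$, $\mathbf{W}_m\le 4a(1-a)$. For every odd $m$ with $3\le m\le n$, $\mathbf{W}_m\le 2a$.
   Context: For $f:\{-1,1\}^n\to\{-1,1\}$ and $S\subseteq[1:n]$, the Fourier coefficient is $\hat f_S:=\mathbb{E}_{\mathbf{x}\sim\mathrm{Unif}\{-1,1\}^n}[f(\mathbf{x})\prod_{i\in S}x_i]$, and the degree-$m$ Fourier weight is $\mathbf{W}_m:=\sum_{S:|S|=m}\hat f_S^{2}$. *)

(* Defs.v *)
From mathcomp Require Import all_boot all_order all_algebra.
Set Implicit Arguments. Unset Strict Implicit. Unset Printing Implicit Defensive.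
Import Order.TTheory GRing.Theory Num.Theory.
Local Open Scope ring_scope.

(* A point of {-1,1}^n is encoded as x : 'I_n -> bool, coordinate i being
   +1 if x i = true and -1 if x i = false. *)
Definition cube (n : nat) := {ffun 'I_n -> bool}.

Definition coord (n : nat) (x : cube n) (i : 'I_n) : rat :=
  if x i then 1 else -1.

Definition fourier (n : nat) (f : cube n -> rat) (S : {set 'I_n}) : rat :=
  (\sum_(x : cube n) f x * \prod_(i in S) coord x i) / (2 ^ n)%:R.

Definition weight (n : nat) (f : cube n -> rat) (m : nat) : rat :=
  \sum_(S : {set 'I_n} | #|S| == m) fourier f S ^+ 2.

(* Main.v *)
Require Import Defs.
From mathcomp Require Import all_boot all_order all_algebra.
Import Order.TTheory GRing.Theory Num.Theory.
From mathcomp Require Import ring lra.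
Local Open Scope ring_scope.
Set Implicit Arguments. Unset Strict Implicit.

Definition chi n (S : {set 'I_n}) (x : cube n) : rat := \prod_(i in S) Defs.coord x i.

Lemma coord2 n (x : cube n) i : Defs.coord x i * Defs.coord x i = 1.
Proof. by rewrite /Defs.coord; case: (x i); rewrite ?mulr1 ?mulrNN ?mulr1. Qed.

Lemma orth n (x y : cube n) :
  \sum_(S : {set 'I_n}) chi S x * chi S y = if x == y then (2 ^ n)%:R else 0.
Proof.
transitivity (\prod_(i : 'I_n) (Defs.coord x i * Defs.coord y i + 1)).
  rewrite bigA_distr; apply: eq_bigr => S _.
  by rewrite /chi -big_split /= big_mkcond.
case: eqP => [<-|/eqP nxy].
  rewrite (eq_bigr (fun _ => 2)) ?prodr_const ?card_ord ?natrX //.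
  by move=> i _; rewrite coord2.
have [i Hi] : exists i, x i != y i.
  apply/existsP; apply: contraR nxy => /existsPn H.
  by apply/eqP/ffunP => i; apply/eqP; move: (H i); rewrite negbK.
rewrite (bigD1 i) //= /Defs.coord.
by move: Hi; case: (x i); case: (y i) => //= _; rewrite ?mulrN ?mulNr mulr1 addNr mul0r.
Qed.

Lemma parseval n (g : cube n -> rat) :
  \sum_(S : {set 'I_n}) fourier g S ^+ 2 = (\sum_x g x ^+ 2) / (2 ^ n)%:R.
Proof.
have N0 : (2 ^ n)%:R != 0 :> rat by rewrite pnatr_eq0 expn_eq0.
rewrite /fourier.
under eq_bigr => S _ do rewrite expr_div_n expr2 big_distrlr /=.
rewrite -mulr_suml exchange_big /=.
transitivity ((\sum_x \sum_y g x * g y * \sum_(S : {set 'I_n}) chi S x * chi S y)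
   / (2 ^ n)%:R ^+ 2).
  congr (_ / _); apply: eq_bigr => x _; rewrite exchange_big /=.
  apply: eq_bigr => y _; rewrite mulr_sumr; apply: eq_bigr => S _.
  rewrite /chi; ring.
transitivity ((\sum_x g x * g x * (2 ^ n)%:R) / (2 ^ n)%:R ^+ 2).
  congr (_ / _); apply: eq_bigr => x _.
  rewrite (bigD1 x) //= orth eqxx big1 ?addr0 // => y /negbTE.
  by rewrite orth eq_sym => ->; rewrite mulr0.
rewrite -mulr_suml expr2 invfM mulrA -[X in X / _]mulrA mulfV // mulr1.
by congr (_ / _); apply: eq_bigr => x _; rewrite expr2.
Qed.

Lemma case4 (u v : rat) : (u = 1 \/ u = -1) -> (v = 1 \/ v = -1) ->
  ((u - v) / 2) ^+ 2 <= (u == 1)%:R + (v == 1)%:R.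
Proof.
have e : (-1 == 1 :> rat) = false by [].
by case=> ->; case=> ->; rewrite ?eqxx ?e expr2 /=; lra.
Qed.

Lemma sum_drop (T : finType) (P : pred T) (F : T -> rat) :
  (forall x, 0 <= F x) -> \sum_(x | P x) F x <= \sum_x F x.
Proof.
move=> F0; rewrite [X in _ <= X](bigID P) /= lerDl.
by apply: sumr_ge0 => x _.
Qed.

Definition negx n (x : cube n) : cube n := [ffun i => ~~ x i].

Lemma negxK n : involutive (@negx n).
Proof. by move=> x; apply/ffunP => i; rewrite !ffunE negbK. Qed.

Lemma chi_negx n (S : {set 'I_n}) x : chi S (negx x) = (-1) ^+ #|S| * chi S x.
Proof.
rewrite /chi -prodrN; apply: eq_bigr => i _.
by rewrite /Defs.coord ffunE; case: (x i); rewrite ?opprK.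
Qed.

Lemma count_ones n (f : cube n -> rat) :
  \sum_x (f x == 1)%:R = (#|[set x : cube n | f x == 1]|)%:R :> rat.
Proof.
rewrite -sum1_card natr_sum [RHS]big_mkcond /=.
by apply: eq_bigr => x _; rewrite inE; case: (f x == 1).
Qed.

Lemma card_cube n : #|{: cube n}| = (2 ^ n)%N.
Proof. by rewrite card_ffun card_bool card_ord. Qed.

Theorem theorem3 (n M : nat) (f : cube n -> rat) :
  (1 <= n)%N -> (1 <= M <= 2 ^ n.-1)%N ->
  (forall x, f x = 1 \/ f x = -1) ->
  #|[set x : cube n | f x == 1]| = M ->
  let a : rat := M%:R / (2 ^ n)%:R in
  (forall m : nat, ~~ odd m -> (2 <= m <= n)%N -> weight f m <= 4 * a * (1 - a)) /\
  (forall m : nat, odd m -> (3 <= m <= n)%N -> weight f m <= 2 * a).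
Proof.
move=> n1 HM hf hcard a.
have N0 : (2 ^ n)%:R != 0 :> rat by rewrite pnatr_eq0 expn_eq0.
have sq : forall x, f x ^+ 2 = 1.
  by move=> x; case: (hf x) => ->; rewrite ?expr1n ?sqrrN ?expr1n.
have tot : \sum_S fourier f S ^+ 2 = 1.
  rewrite parseval (eq_bigr (fun _ => 1)) ?sumr_const; last by move=> x _; rewrite sq.
  by rewrite card_cube -mulr_natl mulr1 mulfV.
have fx : forall x, f x = 2 * (f x == 1)%:R - 1.
  by move=> x; case: (hf x) => ->; rewrite ?eqxx //= (_ : (-1 == 1 :> rat) = false).
have f0 : fourier f set0 = (2 * M%:R - (2 ^ n)%:R) / (2 ^ n)%:R.
  rewrite /fourier; congr (_ / _).
  under eq_bigr => x _ do rewrite big_set0 mulr1 fx.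
  rewrite sumrB -mulr_sumr count_ones hcard sumr_const card_cube.
  by rewrite -mulr_natl mulr1.
split.
  move=> m _ /andP [m2 _].
  have : \sum_(S : {set 'I_n}) fourier f S ^+ 2 =
     weight f m + \sum_(S : {set 'I_n} | #|S| != m) fourier f S ^+ 2.
    by rewrite /weight (bigID (fun S : {set 'I_n} => #|S| == m)).
  rewrite tot (bigD1 set0) /=; last by rewrite cards0 eq_sym -lt0n (leq_trans _ m2).
  move=> E.
  have H0 : 0 <= \sum_(S : {set 'I_n} | (#|S| != m) && (S != set0)) fourier f S ^+ 2.
    by apply: sumr_ge0 => S _; apply: sqr_ge0.
have -> : Defs.weight f m = 1 - fourier f set0 ^+ 2 -
     \sum_(S : {set 'I_n} | (#|S| != m) && (S != set0)) fourier f S ^+ 2.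
    by rewrite E; ring.
  rewrite f0 /a.
  apply: (le_trans (y := 1 - ((2 * M%:R - (2 ^ n)%:R) / (2 ^ n)%:R) ^+ 2)).
    by rewrite lerBlDr lerDl.
  by rewrite le_eqVlt; apply/orP; left; apply/eqP; field.
move=> m om /andP [m3 _].
pose h := fun x => (f x - f (negx x)) / 2.
have hS : forall S : {set 'I_n}, odd #|S| -> fourier h S = fourier f S.
  move=> S oS; rewrite /fourier; congr (_ / _).
  change (\sum_x h x * chi S x = \sum_x f x * chi S x).
  have key : \sum_x f (negx x) * chi S x = - \sum_x f x * chi S x.
    rewrite (reindex_inj (inv_inj (@negxK n))) /= -sumrN.
    apply: eq_bigr => x _.
    by rewrite negxK chi_negx -signr_odd oS expr1 mulN1r mulrN.
  transitivity ((\sum_x f x * chi S x - \sum_x f (negx x) * chi S x) / 2).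
    rewrite -sumrB mulr_suml; apply: eq_bigr => x _; rewrite /h; ring.
  by rewrite key opprK; field.
have Np : 0 <= ((2 ^ n)%:R : rat)^-1 by rewrite invr_ge0 ler0n.
have -> : Defs.weight f m = \sum_(S : {set 'I_n} | #|S| == m) fourier h S ^+ 2.
  by apply: eq_bigr => S /eqP HS; rewrite hS // HS.
apply: (le_trans (y := (\sum_(S : {set 'I_n}) fourier h S ^+ 2) / 1)); first by rewrite divr1; apply: sum_drop => S; apply: sqr_ge0.
rewrite divr1.
rewrite parseval.
apply: (le_trans (y := (\sum_x ((f x == 1)%:R + (f (negx x) == 1)%:R)) / (2 ^ n)%:R)).
  apply: ler_wpM2r => //; apply: ler_sum => x _; rewrite /h.
  exact: case4.
have e2 : \sum_x (f (negx x) == 1)%:R = \sum_x (f x == 1)%:R :> rat.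
  by rewrite (reindex_inj (inv_inj (@negxK n))); apply: eq_bigr => x _; rewrite negxK.
rewrite big_split /= e2.
by rewrite count_ones hcard /a le_eqVlt; apply/orP; left; apply/eqP; field.
Qed.
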